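(* For every $t \in \mathbb{N}_0$ and every integer $b \ge 2$, the cyclotomic polynomial $\Phi_b(x)$ does not divide \begin{align*} S_t(x) = {}& x^{4t+13} + x^{4t+11} + x^{4t+10} + x^{4t+9} - x^{4t+8} - x^{2t+13} - x^{2t+10} - x^{2t+9} + 3x^{2t+7} + x^{2t+5} \\ & - x^{2t+4} + x^{2t+3} - x^{2t+2} + x^{2t+1} - 2x^{t+6} + x^6 - x^5 - x - 1. \end{align*}
   Context: $\Phi_b(x) = \prod_\zeta (x-\zeta)$, where $\zeta$ ranges over the primitive $b$-th roots of unity, is the $b$-th cyclotomic polynomial. *)

(* Defs.v *)
From mathcomp Require Import all_boot all_order all_algebra all_field.
Set Implicit Arguments. Unset Strict Implicit. Unset Printing Implicit Defensive.
Import GRing.Theory Num.Theory.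
Local Open Scope ring_scope.

Definition S_poly (t : nat) : {poly int} :=
  'X^(4*t+13) + 'X^(4*t+11) + 'X^(4*t+10) + 'X^(4*t+9) - 'X^(4*t+8)
  - 'X^(2*t+13) - 'X^(2*t+10) - 'X^(2*t+9) + 3%:P * 'X^(2*t+7) + 'X^(2*t+5)
  - 'X^(2*t+4) + 'X^(2*t+3) - 'X^(2*t+2) + 'X^(2*t+1) - 2%:P * 'X^(t+6)
  + 'X^6 - 'X^5 - 'X - 1.

(* Main.v *)
Require Import Defs.
From mathcomp Require Import all_boot all_order all_algebra all_field.
From Stdlib Require Import ZArith.
From mathcomp Require Import ssrZ ring zify.
Set Implicit Arguments. Unset Strict Implicit. Unset Printing Implicit Defensive.
Import GRing.Theory Num.Theory.
Import ssrZ.Instances.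
Delimit Scope nat_scope with N.
Local Open Scope ring_scope.

Definition phi {R : comNzRingType} (c : Z) : R := (int_of_Z c)%:~R.
Lemma phiD (R : comNzRingType) a b : phi (Z.add a b) = phi a + phi b :> R.
Proof. rewrite /phi; change (Z.add a b) with (a + b)%R. by rewrite rmorphD /= intrD. Qed.
Lemma phiM (R : comNzRingType) a b : phi (Z.mul a b) = phi a * phi b :> R.
Proof. rewrite /phi; change (Z.mul a b) with (a * b)%R. by rewrite rmorphM /= intrM. Qed.
Lemma phi0 (R : comNzRingType) : phi 0%Z = 0 :> R. Proof. by []. Qed.
Lemma phi1 (R : comNzRingType) : phi 1%Z = 1 :> R. Proof. by []. Qed.
Lemma phiN (R : comNzRingType) a : phi (Z.opp a) = - phi a :> R.
Proof. rewrite /phi; change (Z.opp a) with (- a)%R. by rewrite rmorphN /= intrN. Qed.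
Lemma phi_pos (R : comNzRingType) p : phi (Zpos p) = (Pos.to_nat p)%:R :> R.
Proof. by []. Qed.
Lemma phi_neg (R : comNzRingType) p : phi (Zneg p) = - (Pos.to_nat p)%:R :> R.
Proof. rewrite /phi /= NegzE prednK ?intrN //; apply/ltP; exact: Pos2Nat.is_pos. Qed.
Lemma phim1 (R : comNzRingType) : phi (-1)%Z = -1 :> R.
Proof. by rewrite /phi /= NegzE intrN. Qed.

Fixpoint padd (p q : seq Z) : seq Z :=
  match p, q with
  | [::], _ => q
  | _, [::] => p
  | a :: p', b :: q' => Z.add a b :: padd p' q'
  end.
Definition pscale (a : Z) (p : seq Z) := map (Z.mul a) p.
Fixpoint pmul (p q : seq Z) : seq Z :=
  match p with
  | [::] => [::]
  | a :: p' => padd (pscale a q) (0%Z :: pmul p' q)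
  end.
Fixpoint peval {R : comNzRingType} (p : seq Z) (x : R) : R :=
  match p with [::] => 0 | a :: p' => phi a + x * peval p' x end.
Definition pzero (p : seq Z) := all (fun c => Z.eqb c 0%Z) p.
Definition psub p q := padd p (pscale (-1)%Z q).

Lemma peval_add (R : comNzRingType) p q (x : R) : peval (padd p q) x = peval p x + peval q x.
Proof.
elim: p q => [|a p IH] [|b q] /=; rewrite ?add0r ?addr0 //.
by rewrite phiD IH mulrDr; ring.
Qed.
Lemma peval_scale (R : comNzRingType) a p (x : R) : peval (pscale a p) x = phi a * peval p x.
Proof. elim: p => [|b p IH] /=; first by rewrite mulr0. by rewrite phiM IH; ring. Qed.
Lemma peval_mul (R : comNzRingType) p q (x : R) : peval (pmul p q) x = peval p x * peval q x.
Proof.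
elim: p => [|a p IH] /=; first by rewrite mul0r.
by rewrite peval_add peval_scale /= IH phi0; ring.
Qed.
Lemma peval_sub (R : comNzRingType) p q (x : R) : peval (psub p q) x = peval p x - peval q x.
Proof. by rewrite peval_add peval_scale phim1; ring. Qed.
Lemma pzeroP (R : comNzRingType) p (x : R) : pzero p -> peval p x = 0.
Proof.
elim: p => [|a p IH] //= /andP[/Z.eqb_spec -> /IH ->]. by rewrite phi0; ring.
Qed.
Lemma pzero_eq (R : comNzRingType) p q (x : R) : pzero (psub p q) -> peval p x = peval q x.
Proof. by move/(pzeroP x); rewrite peval_sub => /eqP; rewrite subr_eq0 => /eqP. Qed.

(* bivariate: list of x-polys, coefficient of y^j *)
Fixpoint qadd (P Q : seq (seq Z)) : seq (seq Z) :=
  match P, Q with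
  | [::], _ => Q
  | _, [::] => P
  | a :: P', b :: Q' => padd a b :: qadd P' Q'
  end.
Definition qscale (a : seq Z) (P : seq (seq Z)) := map (pmul a) P.
Fixpoint qmul (P Q : seq (seq Z)) : seq (seq Z) :=
  match P with
  | [::] => [::]
  | a :: P' => qadd (qscale a Q) ([::] :: qmul P' Q)
  end.
Fixpoint qeval {R : comNzRingType} (P : seq (seq Z)) (x y : R) : R :=
  match P with [::] => 0 | a :: P' => peval a x + y * qeval P' x y end.
Definition qsub P Q := qadd P (qscale [:: (-1)%Z] Q).
Definition qzero (P : seq (seq Z)) := all pzero P.

Lemma qeval_add (R : comNzRingType) P Q (x y : R) : qeval (qadd P Q) x y = qeval P x y + qeval Q x y.
Proof.
elim: P Q => [|a P IH] [|b Q] /=; rewrite ?add0r ?addr0 //.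
by rewrite peval_add IH; ring.
Qed.
Lemma qeval_scale (R : comNzRingType) a P (x y : R) : qeval (qscale a P) x y = peval a x * qeval P x y.
Proof. elim: P => [|b P IH] /=; first by rewrite mulr0. by rewrite peval_mul IH; ring. Qed.
Lemma qeval_mul (R : comNzRingType) P Q (x y : R) : qeval (qmul P Q) x y = qeval P x y * qeval Q x y.
Proof.
elim: P => [|a P IH] /=; first by rewrite mul0r.
by rewrite qeval_add qeval_scale /= IH; ring.
Qed.
Lemma qeval_sub (R : comNzRingType) P Q (x y : R) : qeval (qsub P Q) x y = qeval P x y - qeval Q x y.
Proof. by rewrite qeval_add qeval_scale /= phim1; ring. Qed.
Lemma qzeroP (R : comNzRingType) P (x y : R) : qzero P -> qeval P x y = 0.
Proof.
elim: P => [|a P IH] //= /andP[/(pzeroP x) -> /IH ->]. by ring.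
Qed.
Lemma qzero_eq (R : comNzRingType) P Q (x y : R) : qzero (qsub P Q) -> qeval P x y = qeval Q x y.
Proof. by move/(qzeroP x y); rewrite qeval_sub => /eqP; rewrite subr_eq0 => /eqP. Qed.

Definition Fl : seq (seq Z) := [:: [:: (-1)%Z; (-1)%Z; (0)%Z; (0)%Z; (0)%Z; (-1)%Z; (1)%Z]; [:: (0)%Z; (0)%Z; (0)%Z; (0)%Z; (0)%Z; (0)%Z; (-2)%Z]; [:: (0)%Z; (1)%Z; (-1)%Z; (1)%Z; (-1)%Z; (1)%Z; (0)%Z; (3)%Z; (0)%Z; (-1)%Z; (-1)%Z; (0)%Z; (0)%Z; (-1)%Z]; [::]; [:: (0)%Z; (0)%Z; (0)%Z; (0)%Z; (0)%Z; (0)%Z; (0)%Z; (0)%Z; (-1)%Z; (1)%Z; (1)%Z; (1)%Z; (0)%Z; (1)%Z]].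
Definition Ftl : seq (seq Z) := [:: [:: (1)%Z; (0)%Z; (1)%Z; (1)%Z; (1)%Z; (-1)%Z]; [::]; [:: (-1)%Z; (0)%Z; (0)%Z; (-1)%Z; (-1)%Z; (0)%Z; (3)%Z; (0)%Z; (1)%Z; (-1)%Z; (1)%Z; (-1)%Z; (1)%Z]; [:: (0)%Z; (0)%Z; (0)%Z; (0)%Z; (0)%Z; (0)%Z; (0)%Z; (-2)%Z]; [:: (0)%Z; (0)%Z; (0)%Z; (0)%Z; (0)%Z; (0)%Z; (0)%Z; (1)%Z; (-1)%Z; (0)%Z; (0)%Z; (0)%Z; (-1)%Z; (-1)%Z]].
Definition Ul : seq (seq Z) := [:: [:: (0)%Z; (0)%Z; (0)%Z; (0)%Z; (0)%Z; (0)%Z; (0)%Z; (0)%Z; (0)%Z; (0)%Z; (0)%Z; (0)%Z; (0)%Z; (0)%Z; (0)%Z; (0)%Z; (0)%Z; (0)%Z; (-1)%Z; (6)%Z; (-14)%Z; (22)%Z; (-31)%Z; (59)%Z; (-111)%Z; (88)%Z; (-111)%Z; (136)%Z; (-344)%Z; (125)%Z; (182)%Z; (158)%Z; (-126)%Z; (130)%Z; (1956)%Z; (-1003)%Z; (609)%Z; (-2399)%Z; (3985)%Z; (-6755)%Z; (2213)%Z; (-6729)%Z; (10095)%Z; (-10317)%Z; (11101)%Z; (-7476)%Z; (17611)%Z; (-15017)%Z; (13944)%Z; (-14951)%Z; (14553)%Z; (-20688)%Z; (13452)%Z; (-15204)%Z; (14735)%Z; (-14374)%Z; (14418)%Z;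 (-9971)%Z; (11166)%Z; (-9212)%Z; (8730)%Z; (-6863)%Z; (5449)%Z; (-5020)%Z; (4066)%Z; (-3297)%Z; (2272)%Z; (-1942)%Z; (1490)%Z; (-1131)%Z; (704)%Z; (-549)%Z; (397)%Z; (-253)%Z; (157)%Z; (-98)%Z; (71)%Z; (-34)%Z; (18)%Z; (-8)%Z; (4)%Z; (-1)%Z]; [:: (0)%Z; (0)%Z; (0)%Z; (0)%Z; (0)%Z; (0)%Z; (0)%Z; (0)%Z; (0)%Z; (0)%Z; (0)%Z; (0)%Z; (0)%Z; (0)%Z; (0)%Z; (0)%Z; (0)%Z; (0)%Z; (0)%Z; (0)%Z; (0)%Z; (0)%Z; (0)%Z; (0)%Z; (2)%Z; (-12)%Z; (28)%Z; (-42)%Z; (50)%Z; (-96)%Z; (218)%Z; (-212)%Z; (238)%Z; (-206)%Z; (810)%Z; (-868)%Z; (542)%Z; (-826)%Z; (1618)%Z; (-3262)%Z; (1608)%Z; (-1864)%Z; (4254)%Z; (-5484)%Z; (6002)%Z; (-2510)%Z; (7008)%Z; (-9504)%Z; (7890)%Z; (-7246)%Z; (6392)%Z; (-12770)%Z; (10236)%Z; (-7886)%Z; (8884)%Z; (-10072)%Z; (11318)%Z; (-7222)%Z; (7390)%Z; (-8110)%Z; (7440)%Z; (-5760)%Z; (4774)%Z; (-4762)%Z; (4100)%Z; (-3074)%Z; (2472)%Z; (-2252)%Z; (1628)%Z; (-1262)%Z; (940)%Z; (-766)%Z; (494)%Z; (-350)%Z; (256)%Z; (-170)%Z; (102)%Z;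 (-66)%Z; (44)%Z; (-20)%Z; (10)%Z; (-4)%Z; (2)%Z]; [:: (0)%Z; (0)%Z; (0)%Z; (0)%Z; (0)%Z; (0)%Z; (0)%Z; (0)%Z; (0)%Z; (0)%Z; (0)%Z; (0)%Z; (0)%Z; (0)%Z; (0)%Z; (0)%Z; (0)%Z; (0)%Z; (0)%Z; (0)%Z; (0)%Z; (0)%Z; (0)%Z; (0)%Z; (0)%Z; (1)%Z; (-7)%Z; (20)%Z; (-37)%Z; (59)%Z; (-105)%Z; (205)%Z; (-285)%Z; (371)%Z; (-541)%Z; (869)%Z; (-1156)%Z; (1139)%Z; (-1444)%Z; (2281)%Z; (-2689)%Z; (2584)%Z; (-2132)%Z; (3845)%Z; (-4719)%Z; (3319)%Z; (-2521)%Z; (3821)%Z; (-6111)%Z; (3144)%Z; (-1302)%Z; (2869)%Z; (-5306)%Z; (2700)%Z; (912)%Z; (2110)%Z; (-2958)%Z; (2054)%Z; (1647)%Z; (393)%Z; (-2391)%Z; (-190)%Z; (354)%Z; (-755)%Z; (-1213)%Z; (-133)%Z; (730)%Z; (88)%Z; (55)%Z; (126)%Z; (416)%Z; (40)%Z; (23)%Z; (-63)%Z; (50)%Z; (-36)%Z; (-10)%Z; (-25)%Z; (6)%Z; (-6)%Z; (1)%Z; (-2)%Z; (1)%Z]; [:: (0)%Z; (0)%Z; (0)%Z; (0)%Z; (0)%Z; (0)%Z; (0)%Z; (0)%Z; (0)%Z; (0)%Z; (0)%Z; (0)%Z; (0)%Z; (0)%Z; (0)%Z; (0)%Z; (0)%Z;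 (0)%Z; (0)%Z; (0)%Z; (0)%Z; (0)%Z; (0)%Z; (0)%Z; (0)%Z; (0)%Z; (0)%Z; (0)%Z; (0)%Z; (0)%Z; (0)%Z; (-2)%Z; (12)%Z; (-26)%Z; (32)%Z; (-28)%Z; (46)%Z; (-132)%Z; (76)%Z; (-14)%Z; (-64)%Z; (-58)%Z; (136)%Z; (586)%Z; (-302)%Z; (532)%Z; (-212)%Z; (948)%Z; (-1762)%Z; (240)%Z; (-1760)%Z; (1064)%Z; (-2356)%Z; (1684)%Z; (-778)%Z; (3110)%Z; (-778)%Z; (2372)%Z; (-1014)%Z; (1448)%Z; (-1732)%Z; (98)%Z; (-1782)%Z; (278)%Z; (-770)%Z; (310)%Z; (-404)%Z; (522)%Z; (116)%Z; (228)%Z; (-64)%Z; (138)%Z; (88)%Z; (34)%Z; (-18)%Z; (0)%Z; (28)%Z; (-4)%Z; (-2)%Z; (-14)%Z; (4)%Z; (-4)%Z; (0)%Z; (-2)%Z]].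
Definition Vl : seq (seq Z) := [:: [:: (0)%Z; (0)%Z; (0)%Z; (0)%Z; (0)%Z; (0)%Z; (0)%Z; (0)%Z; (0)%Z; (0)%Z; (0)%Z; (0)%Z; (0)%Z; (0)%Z; (0)%Z; (0)%Z; (0)%Z; (0)%Z; (0)%Z; (-1)%Z; (7)%Z; (-21)%Z; (44)%Z; (-80)%Z; (146)%Z; (-267)%Z; (393)%Z; (-591)%Z; (864)%Z; (-1330)%Z; (1787)%Z; (-2269)%Z; (2985)%Z; (-3906)%Z; (5213)%Z; (-6137)%Z; (6978)%Z; (-8183)%Z; (10455)%Z; (-12237)%Z; (12238)%Z; (-12229)%Z; (15286)%Z; (-18221)%Z; (16038)%Z; (-14063)%Z; (16036)%Z; (-20542)%Z; (17435)%Z; (-11062)%Z; (14122)%Z; (-16871)%Z; (15159)%Z; (-7573)%Z; (7253)%Z; (-12808)%Z; (8245)%Z; (-4618)%Z; (2451)%Z; (-5731)%Z; (5049)%Z; (-264)%Z; (1377)%Z; (-1305)%Z; (1901)%Z; (104)%Z; (-282)%Z; (-605)%Z; (8)%Z; (5)%Z; (-316)%Z; (-72)%Z; (-50)%Z; (107)%Z; (-60)%Z; (41)%Z; (-15)%Z; (37)%Z; (-14)%Z; (9)%Z; (-4)%Z; (3)%Z; (-1)%Z]; [:: (0)%Z; (0)%Z; (0)%Z; (0)%Z; (0)%Z; (0)%Z; (0)%Z; (0)%Z; (0)%Z; (0)%Z; (0)%Z; (0)%Z; (0)%Z; (0)%Z; (0)%Z; (0)%Z; (0)%Z; (0)%Z;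 (0)%Z; (0)%Z; (0)%Z; (0)%Z; (0)%Z; (0)%Z; (0)%Z; (2)%Z; (-12)%Z; (28)%Z; (-44)%Z; (56)%Z; (-84)%Z; (170)%Z; (-166)%Z; (210)%Z; (-94)%Z; (208)%Z; (-172)%Z; (-8)%Z; (364)%Z; (-490)%Z; (604)%Z; (-890)%Z; (1754)%Z; (-2444)%Z; (1650)%Z; (-2964)%Z; (3602)%Z; (-4324)%Z; (4106)%Z; (-3168)%Z; (6488)%Z; (-4824)%Z; (4426)%Z; (-4680)%Z; (4492)%Z; (-5886)%Z; (2128)%Z; (-3774)%Z; (3536)%Z; (-2334)%Z; (2068)%Z; (-978)%Z; (2266)%Z; (-538)%Z; (480)%Z; (-530)%Z; (472)%Z; (-118)%Z; (-222)%Z; (-156)%Z; (-26)%Z; (94)%Z; (-166)%Z; (6)%Z; (-62)%Z; (66)%Z; (-50)%Z; (22)%Z; (-20)%Z; (24)%Z; (-8)%Z; (6)%Z; (-2)%Z; (2)%Z]; [:: (0)%Z; (0)%Z; (0)%Z; (0)%Z; (0)%Z; (0)%Z; (0)%Z; (0)%Z; (0)%Z; (0)%Z; (0)%Z; (0)%Z; (0)%Z; (0)%Z; (0)%Z; (0)%Z; (0)%Z; (0)%Z; (0)%Z; (0)%Z; (0)%Z; (0)%Z; (0)%Z; (0)%Z; (0)%Z; (0)%Z; (1)%Z; (-7)%Z; (19)%Z; (-32)%Z; (51)%Z; (-96)%Z; (189)%Z; (-239)%Z; (293)%Z; (-531)%Z; (809)%Z; (-1066)%Z; (860)%Z; (-1621)%Z;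 (2484)%Z; (-2640)%Z; (2671)%Z; (-2382)%Z; (5831)%Z; (-4867)%Z; (4271)%Z; (-4800)%Z; (5975)%Z; (-9723)%Z; (3663)%Z; (-6080)%Z; (7222)%Z; (-7905)%Z; (7469)%Z; (-2158)%Z; (8175)%Z; (-5804)%Z; (5293)%Z; (-3614)%Z; (3015)%Z; (-5707)%Z; (2059)%Z; (-2712)%Z; (1732)%Z; (-2198)%Z; (1734)%Z; (-649)%Z; (1156)%Z; (-579)%Z; (693)%Z; (-263)%Z; (283)%Z; (-229)%Z; (119)%Z; (-95)%Z; (41)%Z; (-48)%Z; (18)%Z; (-12)%Z; (5)%Z; (-3)%Z; (1)%Z]; [:: (0)%Z; (0)%Z; (0)%Z; (0)%Z; (0)%Z; (0)%Z; (0)%Z; (0)%Z; (0)%Z; (0)%Z; (0)%Z; (0)%Z; (0)%Z; (0)%Z; (0)%Z; (0)%Z; (0)%Z; (0)%Z; (0)%Z; (0)%Z; (0)%Z; (0)%Z; (0)%Z; (0)%Z; (0)%Z; (0)%Z; (0)%Z; (0)%Z; (0)%Z; (0)%Z; (0)%Z; (0)%Z; (-2)%Z; (12)%Z; (-24)%Z; (24)%Z; (-22)%Z; (46)%Z; (-138)%Z; (66)%Z; (30)%Z; (66)%Z; (-12)%Z; (300)%Z; (724)%Z; (-132)%Z; (140)%Z; (-776)%Z; (306)%Z; (-2286)%Z; (-126)%Z; (-1836)%Z; (2086)%Z; (-1232)%Z; (3286)%Z; (-536)%Z; (3822)%Z; (-1786)%Z; (2242)%Z; (-3106)%Z; (1290)%Z;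 (-3072)%Z; (1138)%Z; (-2374)%Z; (1470)%Z; (-1158)%Z; (1376)%Z; (-878)%Z; (1054)%Z; (-440)%Z; (636)%Z; (-386)%Z; (374)%Z; (-186)%Z; (184)%Z; (-126)%Z; (84)%Z; (-54)%Z; (32)%Z; (-30)%Z; (10)%Z; (-8)%Z; (2)%Z; (-2)%Z]].
Definition Q0l : seq Z := [:: (1)%Z; (-4)%Z; (6)%Z; (-14)%Z; (25)%Z; (-58)%Z; (81)%Z; (-68)%Z; (294)%Z; (-152)%Z; (736)%Z; (72)%Z; (1622)%Z; (-688)%Z; (1620)%Z; (-2178)%Z; (515)%Z; (-8916)%Z; (-4390)%Z; (-13788)%Z; (-4613)%Z; (-19286)%Z; (1167)%Z; (-4648)%Z; (23104)%Z; (3790)%Z; (38002)%Z; (18156)%Z; (38485)%Z; (-12678)%Z; (11311)%Z; (-30780)%Z; (-12782)%Z; (-60812)%Z; (-12782)%Z; (-30780)%Z; (11311)%Z; (-12678)%Z; (38485)%Z; (18156)%Z; (38002)%Z; (3790)%Z; (23104)%Z; (-4648)%Z; (1167)%Z; (-19286)%Z; (-4613)%Z; (-13788)%Z; (-4390)%Z; (-8916)%Z; (515)%Z; (-2178)%Z; (1620)%Z; (-688)%Z; (1622)%Z; (72)%Z; (736)%Z; (-152)%Z; (294)%Z; (-68)%Z; (81)%Z; (-58)%Z; (25)%Z; (-14)%Z; (6)%Z; (-4)%Z; (1)%Z].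
Definition U2_odd : seq Z := [:: (-3)%Z; (1)%Z; (1)%Z; (0)%Z; (1)%Z; (0)%Z; (-1)%Z; (-1)%Z; (-3)%Z; (2)%Z; (-3)%Z; (0)%Z; (3)%Z; (-2)%Z; (0)%Z; (0)%Z; (-3)%Z; (-3)%Z; (2)%Z; (2)%Z; (0)%Z; (0)%Z; (1)%Z; (-3)%Z; (1)%Z; (-1)%Z; (-1)%Z; (-2)%Z; (-1)%Z; (-2)%Z; (-2)%Z; (2)%Z; (3)%Z; (-3)%Z; (-3)%Z; (1)%Z; (-2)%Z; (-2)%Z; (-3)%Z; (3)%Z; (-2)%Z; (-1)%Z; (1)%Z; (0)%Z; (2)%Z; (-2)%Z; (-2)%Z; (2)%Z; (3)%Z; (-3)%Z; (3)%Z; (0)%Z; (1)%Z; (-2)%Z; (0)%Z; (1)%Z; (3)%Z; (1)%Z; (-1)%Z; (2)%Z; (-3)%Z; (1)%Z; (-1)%Z; (-2)%Z; (-1)%Z; (0)%Z; (0)%Z; (1)%Z; (-1)%Z; (1)%Z; (-1)%Z; (-1)%Z; (-2)%Z; (0)%Z; (2)%Z; (-3)%Z; (-1)%Z; (2)%Z; (3)%Z; (1)%Z; (2)%Z; (1)%Z; (-3)%Z; (-3)%Z; (3)%Z; (1)%Z; (-3)%Z; (-1)%Z; (-1)%Z; (0)%Z; (3)%Z; (2)%Z; (0)%Z; (-3)%Z; (3)%Z; (1)%Z; (3)%Z; (-1)%Z; (1)%Z; (1)%Z; (0)%Z; (1)%Z; (-1)%Z; (3)%Z; (-1)%Z; (-1)%Z;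 (-3)%Z; (0)%Z; (0)%Z; (3)%Z; (0)%Z; (2)%Z; (3)%Z; (-1)%Z; (-1)%Z; (-3)%Z; (2)%Z; (-2)%Z; (0)%Z; (-2)%Z; (-2)%Z; (3)%Z; (3)%Z; (1)%Z; (-3)%Z; (3)%Z; (1)%Z; (3)%Z; (1)%Z; (-1)%Z; (-2)%Z; (-3)%Z].
Definition V2_odd : seq Z := [:: (-3)%Z; (1)%Z; (2)%Z; (2)%Z; (3)%Z; (3)%Z; (-2)%Z; (1)%Z; (2)%Z; (1)%Z; (1)%Z; (-1)%Z; (2)%Z; (-3)%Z; (2)%Z; (0)%Z; (3)%Z; (-3)%Z; (-3)%Z; (-1)%Z; (2)%Z; (0)%Z; (2)%Z; (1)%Z; (0)%Z; (2)%Z; (-3)%Z; (-2)%Z; (-2)%Z; (-3)%Z; (3)%Z; (2)%Z; (3)%Z; (-3)%Z; (1)%Z; (-2)%Z; (-3)%Z; (0)%Z; (-2)%Z; (3)%Z; (2)%Z; (3)%Z; (-3)%Z; (-3)%Z; (2)%Z; (-1)%Z; (-2)%Z; (-1)%Z; (0)%Z; (-3)%Z; (3)%Z; (0)%Z; (3)%Z; (2)%Z; (-2)%Z; (2)%Z; (2)%Z; (-2)%Z; (-3)%Z; (-2)%Z; (-2)%Z; (2)%Z; (2)%Z; (2)%Z; (-3)%Z; (3)%Z].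
Definition W_odd : seq Z := [:: (-1)%Z; (2)%Z; (-1)%Z; (6)%Z; (-15)%Z; (26)%Z; (-33)%Z; (29)%Z; (-132)%Z; (94)%Z; (-266)%Z; (50)%Z; (-593)%Z; (554)%Z; (-530)%Z; (1117)%Z; (-406)%Z; (3569)%Z; (316)%Z; (3799)%Z; (-1719)%Z; (5218)%Z; (-5534)%Z; (336)%Z; (-10325)%Z; (5489)%Z; (-9277)%Z; (8179)%Z; (-2236)%Z; (23942)%Z; (-830)%Z; (18100)%Z; (-5486)%Z; (12926)%Z; (-22431)%Z; (-4005)%Z; (-22859)%Z; (-48)%Z; (-18271)%Z; (5620)%Z; (-3242)%Z; (6822)%Z; (-1241)%Z; (-123)%Z; (-5900)%Z; (-3420)%Z; (457)%Z; (3467)%Z; (4686)%Z; (5217)%Z; (2176)%Z; (-8559)%Z; (-22174)%Z; (-18318)%Z; (-24633)%Z; (1363)%Z; (13051)%Z; (29423)%Z; (50456)%Z; (54703)%Z; (58325)%Z; (11715)%Z; (25543)%Z; (-16798)%Z; (6124)%Z; (-72459)%Z; (4836)%Z; (-40304)%Z; (21963)%Z; (-43415)%Z; (23200)%Z; (-5434)%Z; (7500)%Z; (-42991)%Z; (-29045)%Z; (-12610)%Z; (-30626)%Z; (-16899)%Z; (-36192)%Z; (36183)%Z; (1086)%Z; (16046)%Z; (2712)%Z; (51996)%Z; (51628)%Z; (20603)%Z; (11231)%Z; (12864)%Z; (20702)%Z; (-49030)%Z; (-29841)%Z; (-12589)%Z; (41355)%Z; (10920)%Z; (-2121)%Z;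 (31270)%Z; (33007)%Z; (-18480)%Z; (-58151)%Z; (-25093)%Z; (7340)%Z; (-20618)%Z; (-39693)%Z; (-4001)%Z; (70827)%Z; (2863)%Z; (11588)%Z; (16969)%Z; (66306)%Z; (-9626)%Z; (-69708)%Z; (-46862)%Z; (-27207)%Z; (-47085)%Z; (-80213)%Z; (32731)%Z; (31352)%Z; (69809)%Z; (-1531)%Z; (55865)%Z; (39387)%Z; (1730)%Z; (-9266)%Z; (-20338)%Z; (21903)%Z; (-40676)%Z; (12863)%Z; (-64310)%Z; (33515)%Z; (-60995)%Z; (21188)%Z; (-49534)%Z; (18811)%Z; (-15017)%Z; (17609)%Z; (12813)%Z; (30001)%Z; (55900)%Z; (25314)%Z; (55419)%Z; (-18711)%Z; (14929)%Z; (-73292)%Z; (-35739)%Z; (-90149)%Z; (-28787)%Z; (-41606)%Z; (19620)%Z; (26730)%Z; (72818)%Z; (66002)%Z; (62756)%Z; (49340)%Z; (24649)%Z; (-7933)%Z; (-43789)%Z; (-53568)%Z; (-59932)%Z; (-66757)%Z; (-49441)%Z; (-22676)%Z; (11003)%Z; (19781)%Z; (46650)%Z; (47786)%Z; (52249)%Z; (23852)%Z; (17534)%Z; (-6767)%Z; (-15277)%Z; (-30280)%Z; (-24391)%Z; (-23064)%Z; (-13450)%Z; (-7024)%Z; (2107)%Z; (5711)%Z; (6996)%Z; (7151)%Z; (5451)%Z; (3813)%Z; (1348)%Z; (795)%Z; (-296)%Z; (-214)%Z; (-639)%Z; (-200)%Z; (-303)%Z; (-42)%Z; (-104)%Z;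 (19)%Z; (-27)%Z; (15)%Z; (-6)%Z; (7)%Z; (-3)%Z; (1)%Z].
Definition U2_two : seq Z := [:: (1)%Z; (3)%Z; (-1)%Z; (0)%Z; (3)%Z; (3)%Z; (-2)%Z; (-3)%Z; (-1)%Z; (0)%Z; (3)%Z; (-2)%Z; (3)%Z; (1)%Z; (-3)%Z; (1)%Z; (0)%Z; (0)%Z; (1)%Z; (2)%Z; (1)%Z; (-3)%Z; (3)%Z; (-3)%Z; (2)%Z; (2)%Z; (0)%Z; (0)%Z; (-2)%Z; (0)%Z; (2)%Z; (-2)%Z; (2)%Z; (0)%Z; (0)%Z; (-2)%Z; (2)%Z; (-1)%Z; (2)%Z; (-1)%Z; (3)%Z; (1)%Z; (-1)%Z; (-2)%Z; (-1)%Z; (-2)%Z; (0)%Z; (0)%Z; (2)%Z; (-2)%Z; (2)%Z; (2)%Z; (-2)%Z; (-1)%Z; (1)%Z; (2)%Z; (1)%Z; (2)%Z; (3)%Z; (-3)%Z; (0)%Z; (2)%Z; (-2)%Z; (-1)%Z; (-3)%Z; (0)%Z; (1)%Z; (3)%Z; (3)%Z; (3)%Z; (1)%Z; (-3)%Z; (2)%Z; (1)%Z; (0)%Z; (2)%Z; (-1)%Z; (-1)%Z; (-1)%Z; (-2)%Z; (-1)%Z; (1)%Z; (-2)%Z; (0)%Z; (3)%Z; (-1)%Z; (0)%Z; (2)%Z; (2)%Z; (0)%Z; (-3)%Z; (-3)%Z; (-1)%Z; (-1)%Z; (-1)%Z; (-3)%Z; (-2)%Z; (3)%Z; (-2)%Z;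 (-1)%Z; (-2)%Z; (-1)%Z; (3)%Z; (-1)%Z; (2)%Z; (-2)%Z; (-2)%Z; (-2)%Z; (1)%Z; (1)%Z; (-1)%Z; (-3)%Z; (0)%Z; (-2)%Z; (-3)%Z; (-1)%Z; (-2)%Z; (-1)%Z; (-3)%Z; (-3)%Z; (-1)%Z; (-1)%Z; (2)%Z; (-2)%Z; (-2)%Z; (2)%Z; (3)%Z; (2)%Z; (0)%Z; (-1)%Z; (-1)%Z; (2)%Z].
Definition V2_two : seq Z := [:: (0)%Z; (1)%Z; (0)%Z; (2)%Z; (-1)%Z; (-1)%Z; (-1)%Z; (2)%Z; (-3)%Z; (2)%Z; (2)%Z; (-1)%Z; (3)%Z; (1)%Z; (3)%Z; (0)%Z; (-1)%Z; (1)%Z; (-3)%Z; (2)%Z; (1)%Z; (2)%Z; (3)%Z; (1)%Z; (0)%Z; (-2)%Z; (-3)%Z; (1)%Z; (-2)%Z; (-2)%Z; (0)%Z; (2)%Z; (1)%Z; (3)%Z; (2)%Z; (-2)%Z; (3)%Z; (-1)%Z; (0)%Z; (3)%Z; (1)%Z; (-3)%Z; (-3)%Z; (2)%Z; (0)%Z; (2)%Z; (3)%Z; (1)%Z; (2)%Z; (-1)%Z; (2)%Z; (-3)%Z; (-2)%Z; (0)%Z; (1)%Z; (2)%Z; (-3)%Z; (2)%Z; (3)%Z; (2)%Z; (-3)%Z; (1)%Z; (1)%Z; (0)%Z; (2)%Z; (-2)%Z].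
Definition W_two : seq Z := [:: (0)%Z; (0)%Z; (-1)%Z; (2)%Z; (-3)%Z; (5)%Z; (-17)%Z; (34)%Z; (4)%Z; (110)%Z; (2)%Z; (375)%Z; (250)%Z; (661)%Z; (-109)%Z; (755)%Z; (-518)%Z; (-650)%Z; (-4594)%Z; (-3329)%Z; (-6677)%Z; (-6353)%Z; (-11790)%Z; (-2801)%Z; (-655)%Z; (6804)%Z; (4645)%Z; (22953)%Z; (23962)%Z; (20403)%Z; (2751)%Z; (7379)%Z; (-5500)%Z; (-26240)%Z; (-41280)%Z; (-25442)%Z; (-11606)%Z; (-17149)%Z; (-1388)%Z; (19743)%Z; (44666)%Z; (17166)%Z; (21581)%Z; (9091)%Z; (27428)%Z; (-22013)%Z; (-2850)%Z; (-22360)%Z; (20111)%Z; (-27970)%Z; (14150)%Z; (-9178)%Z; (33300)%Z; (-31647)%Z; (31674)%Z; (-16219)%Z; (26511)%Z; (-36994)%Z; (38385)%Z; (-19697)%Z; (33200)%Z; (-18750)%Z; (66499)%Z; (-26765)%Z; (58864)%Z; (11061)%Z; (53835)%Z; (-40274)%Z; (49836)%Z; (-19794)%Z; (13934)%Z; (-70316)%Z; (39161)%Z; (-39100)%Z; (12884)%Z; (8718)%Z; (69502)%Z; (-5875)%Z; (77263)%Z; (50392)%Z; (57526)%Z; (-11457)%Z; (44857)%Z; (21805)%Z; (-2631)%Z; (-3257)%Z; (21198)%Z; (-27474)%Z; (-6177)%Z; (2405)%Z; (-36805)%Z; (-21707)%Z; (34517)%Z; (68784)%Z; (34197)%Z;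 (88940)%Z; (129099)%Z; (85155)%Z; (12939)%Z; (27982)%Z; (-19028)%Z; (-36190)%Z; (-39412)%Z; (-29739)%Z; (-53167)%Z; (9448)%Z; (52461)%Z; (17743)%Z; (-15012)%Z; (65382)%Z; (100730)%Z; (74832)%Z; (53508)%Z; (61201)%Z; (43388)%Z; (37996)%Z; (16464)%Z; (-68064)%Z; (-105678)%Z; (-11933)%Z; (27398)%Z; (-45005)%Z; (-52395)%Z; (48905)%Z; (104370)%Z; (49266)%Z; (28547)%Z; (49159)%Z; (53542)%Z; (38455)%Z; (37771)%Z; (-31365)%Z; (-33548)%Z; (-9524)%Z; (35699)%Z; (-27447)%Z; (-24115)%Z; (-4232)%Z; (55199)%Z; (-2019)%Z; (13080)%Z; (-25371)%Z; (7698)%Z; (-8186)%Z; (18914)%Z; (-34165)%Z; (-9200)%Z; (894)%Z; (50108)%Z; (7467)%Z; (17485)%Z; (27764)%Z; (53031)%Z; (20408)%Z; (4911)%Z; (-13515)%Z; (-11045)%Z; (-25615)%Z; (-37845)%Z; (-38649)%Z; (-28003)%Z; (-4987)%Z; (423)%Z; (12680)%Z; (16689)%Z; (33722)%Z; (22550)%Z; (22335)%Z; (6791)%Z; (12771)%Z; (-1529)%Z; (-56)%Z; (-9545)%Z; (-806)%Z; (-6591)%Z; (-1570)%Z; (-5711)%Z; (419)%Z; (-2392)%Z; (272)%Z; (-1786)%Z; (817)%Z; (-485)%Z; (537)%Z; (-348)%Z; (418)%Z; (-50)%Z; (185)%Z; (-78)%Z; (81)%Z; (-22)%Z; (25)%Z;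 (-17)%Z; (7)%Z; (-3)%Z; (1)%Z; (-1)%Z].
Definition U2_four : seq Z := [:: (-3)%Z; (3)%Z; (2)%Z; (-2)%Z; (-1)%Z; (3)%Z; (0)%Z; (1)%Z; (-3)%Z; (-3)%Z; (3)%Z; (3)%Z; (-1)%Z; (3)%Z; (0)%Z; (3)%Z; (-3)%Z; (-1)%Z; (1)%Z; (-3)%Z; (1)%Z; (2)%Z; (2)%Z; (-2)%Z; (1)%Z; (-3)%Z; (3)%Z; (2)%Z; (3)%Z; (2)%Z; (0)%Z; (-3)%Z; (-3)%Z; (1)%Z; (2)%Z; (-3)%Z; (1)%Z; (-1)%Z; (-2)%Z; (-1)%Z; (-3)%Z; (-2)%Z; (-1)%Z; (3)%Z; (-2)%Z; (3)%Z; (3)%Z; (-2)%Z; (-1)%Z; (-2)%Z; (0)%Z; (2)%Z; (0)%Z; (2)%Z; (1)%Z; (-3)%Z; (-2)%Z; (-1)%Z; (3)%Z; (1)%Z; (0)%Z; (1)%Z; (3)%Z; (0)%Z; (3)%Z; (-1)%Z].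
Definition V2_four : seq Z := [:: (-3)%Z; (-3)%Z; (2)%Z; (2)%Z; (-1)%Z; (-3)%Z; (0)%Z; (-1)%Z; (-3)%Z; (3)%Z; (3)%Z; (-3)%Z; (-1)%Z; (-3)%Z; (0)%Z; (-3)%Z; (-3)%Z; (1)%Z; (1)%Z; (3)%Z; (1)%Z; (-2)%Z; (2)%Z; (2)%Z; (1)%Z; (3)%Z; (3)%Z; (-2)%Z; (3)%Z; (-2)%Z; (0)%Z; (3)%Z; (-3)%Z; (-1)%Z; (2)%Z; (3)%Z; (1)%Z; (1)%Z; (-2)%Z; (1)%Z; (-3)%Z; (2)%Z; (-1)%Z; (-3)%Z; (-2)%Z; (-3)%Z; (3)%Z; (2)%Z; (-1)%Z; (2)%Z; (0)%Z; (-2)%Z; (0)%Z; (-2)%Z; (1)%Z; (3)%Z; (-2)%Z; (1)%Z; (3)%Z; (-1)%Z; (0)%Z; (-1)%Z; (3)%Z; (0)%Z; (3)%Z; (1)%Z].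
Definition W_four : seq Z := [:: (-1)%Z; (0)%Z; (-8)%Z; (0)%Z; (-28)%Z; (0)%Z; (-102)%Z; (0)%Z; (-252)%Z; (0)%Z; (-632)%Z; (0)%Z; (-988)%Z; (0)%Z; (-1468)%Z; (0)%Z; (-1632)%Z; (0)%Z; (-3768)%Z; (0)%Z; (-8644)%Z; (0)%Z; (-19078)%Z; (0)%Z; (-23610)%Z; (0)%Z; (-25708)%Z; (0)%Z; (-13130)%Z; (0)%Z; (-26750)%Z; (0)%Z; (-43122)%Z; (0)%Z; (-78604)%Z; (0)%Z; (-59136)%Z; (0)%Z; (-25712)%Z; (0)%Z; (5400)%Z; (0)%Z; (-31084)%Z; (0)%Z; (-87124)%Z; (0)%Z; (-105476)%Z; (0)%Z; (-39304)%Z; (0)%Z; (45140)%Z; (0)%Z; (113114)%Z; (0)%Z; (89124)%Z; (0)%Z; (55652)%Z; (0)%Z; (-15612)%Z; (0)%Z; (-5714)%Z; (0)%Z; (-5432)%Z; (0)%Z; (48572)%Z; (0)%Z; (38380)%Z; (0)%Z; (61842)%Z; (0)%Z; (54272)%Z; (0)%Z; (62048)%Z; (0)%Z; (10400)%Z; (0)%Z; (-46152)%Z; (0)%Z; (-79468)%Z; (0)%Z; (-54588)%Z; (0)%Z; (-13842)%Z; (0)%Z; (32944)%Z; (0)%Z; (62822)%Z; (0)%Z; (97296)%Z; (0)%Z; (74080)%Z; (0)%Z; (28964)%Z; (0)%Z; (-32722)%Z; (0)%Z; (-19646)%Z; (0)%Z; (27146)%Z; (0)%Z; (82424)%Z;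 (0)%Z; (82462)%Z; (0)%Z; (48926)%Z; (0)%Z; (10774)%Z; (0)%Z; (-6916)%Z; (0)%Z; (-4660)%Z; (0)%Z; (900)%Z; (0)%Z; (4750)%Z; (0)%Z; (3650)%Z; (0)%Z; (2238)%Z; (0)%Z; (852)%Z; (0)%Z; (350)%Z; (0)%Z; (106)%Z; (0)%Z; (42)%Z; (0)%Z; (10)%Z; (0)%Z; (2)%Z].

Fixpoint spread (p : seq Z) : seq Z :=
  match p with [::] => [::] | [:: a] => [:: a] | a :: p' => a :: 0%Z :: spread p' end.
Definition pneg (p : seq Z) := map Z.opp p.
Fixpoint alt (p : seq Z) : seq Z :=
  match p with [::] => [::] | a :: p' => a :: pneg (alt p') end.
Definition Rl := pmul (rcons (nseq 18 0%Z) 1%Z) (pmul [:: 1%Z; (-2)%Z; 1%Z] Q0l).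

Lemma check1 : qzero (qsub (qadd (qmul Ul Fl) (qmul Vl Ftl)) [:: Rl]).
Proof. by vm_compute. Qed.
Lemma check_odd : pzero (psub (padd (pmul U2_odd Q0l) (pmul V2_odd (spread Q0l))) (padd [:: 1%Z] (pscale 7%Z W_odd))).
Proof. by vm_compute. Qed.
Lemma check_two : pzero (psub (padd (pmul U2_two Q0l) (pmul V2_two (spread (alt Q0l)))) (padd [:: 1%Z] (pscale 7%Z W_two))).
Proof. by vm_compute. Qed.
Lemma check_four : pzero (psub (padd (pmul U2_four Q0l) (pmul V2_four (alt Q0l))) (padd [:: 1%Z] (pscale 7%Z W_four))).
Proof. by vm_compute. Qed.


Lemma peval_cons0 (R : comNzRingType) p (x : R) : peval (0%Z :: p) x = x * peval p x.
Proof. by rewrite /= phi0 add0r. Qed.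
Lemma peval_pneg (R : comNzRingType) p (x : R) : peval (pneg p) x = - peval p x.
Proof. elim: p => [|a p IH] /=; first by rewrite oppr0. by rewrite phiN IH; ring. Qed.
Lemma peval_alt (R : comNzRingType) p (x : R) : peval (alt p) x = peval p (- x).
Proof. elim: p => [|a p IH] //=. by rewrite peval_pneg IH; ring. Qed.
Lemma peval_spread (R : comNzRingType) p (x : R) : peval (spread p) x = peval p (x ^+ 2).
Proof.
elim: p => [|a p IH] //=. case: p IH => [|b p] IH /=; first by rewrite !mulr0.
by rewrite phi0 IH /=; ring.
Qed.
Lemma peval_Xn (R : comNzRingType) n (x : R) : peval (rcons (nseq n 0%Z) 1%Z) x = x ^+ n.
Proof.
elim: n => [|n IH] /=; first by rewrite phi1 mulr0 addr0.
by rewrite phi0 IH exprS add0r.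
Qed.

Lemma part1 (z y : algC) : z != 0 -> z != 1 -> qeval Fl z y = 0 -> qeval Ftl z y = 0 -> peval Q0l z = 0.
Proof.
move=> z0 z1 HF HFt.
have := qzero_eq z y check1.
have q1 : forall r, qeval [:: r] z y = peval r z by move=> r; rewrite /= mulr0 addr0.
rewrite qeval_add !qeval_mul HF HFt !mulr0 addr0 q1.
rewrite /Rl !peval_mul peval_Xn => /esym /eqP.
have nz18 : z ^+ 18 != 0 by apply: expf_neq0.
have e2 : peval [:: 1%Z; (-2)%Z; 1%Z] z = (z - 1) ^+ 2.
  rewrite /= !phi_pos phi_neg; cbv [Pos.to_nat Pos.iter_op Nat.add]; ring.
have nz2 : (z - 1) ^+ 2 != 0 by apply: expf_neq0; rewrite subr_eq0.
rewrite e2 => /eqP H; apply/eqP.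
by move: H => /eqP; rewrite mulf_eq0 (negbTE nz18) /= mulf_eq0 (negbTE nz2).
Qed.

Lemma Aint_peval p (x : algC) : x \in Aint -> peval p x \in Aint.
Proof.
move=> xA; elim: p => [|a p IH] /=; first exact: Aint0.
by rewrite rpredD ?rpredM // /phi Aint_int.
Qed.

Lemma no_seventh (a : algC) : a \in Aint -> 1 + 7 * a = 0 -> False.
Proof.
move=> aA H.
have ea : a = - (7%:R)^-1.
  have h7 : (7%:R : algC) != 0 by rewrite pnatr_eq0.
  apply: (mulfI h7); rewrite mulrN mulfV //. by apply/eqP; rewrite -addr_eq0 addrC H.
have aQ : a \in Crat by rewrite ea rpredN rpredV rpred_nat.
have := Cint_rat_Aint aQ aA => /intrP [k ek].
move: H; rewrite ek => /eqP.
have -> : 1 + 7 * (k%:~R : algC) = (1 + 7 * k)%:~R by rewrite intrD intrM.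
rewrite intr_eq0 => /eqP. lia.
Qed.


Lemma evalS (u : algC) t : (map_poly intr (S_poly t)).[u] = qeval Fl u (u ^+ t).
Proof.
rewrite /S_poly !(rmorphB, rmorphD, rmorphM, rmorphXn, map_polyC, map_polyX, rmorph1) !hornerE.
have e : forall a b, u ^+ (a * t + b) = u ^+ b * (u ^+ t) ^+ a.
  by move=> a b; rewrite exprD mulnC exprM mulrC.
rewrite /= !map_polyX !hornerX. rewrite !e exprD.
set y := u ^+ t.
rewrite ?phi_pos ?phi_neg; cbv [Pos.to_nat Pos.iter_op Nat.add].
ring.
Qed.

Lemma evalFt (u y : algC) : u != 0 -> y != 0 ->
  qeval Ftl u y = u ^+ 13 * y ^+ 4 * qeval Fl u^-1 y^-1.
Proof.
move=> u0 y0.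
rewrite /Ftl /Fl /= ?phi_pos ?phi_neg; cbv [Pos.to_nat Pos.iter_op Nat.add].
field.
by rewrite u0 y0.
Qed.

Lemma rootS n t (u : algC) : 'Phi_n %| S_poly t -> n.-primitive_root u ->
  (map_poly intr (S_poly t)).[u] = 0.
Proof.
move=> /(Pdiv.IdomainMonic.dvdpP (Cyclotomic_monic n)) [q ->] pu.
rewrite rmorphM /= hornerM (Cintr_Cyclotomic pu).
have : root (cyclotomic u n) u by rewrite root_cyclotomic.
by move/eqP ->; rewrite mulr0.
Qed.

Lemma Q0_root b t (u : algC) : 'Phi_b %| S_poly t -> (2 <= b)%N -> b.-primitive_root u ->
  peval Q0l u = 0.
Proof.
move=> hd b2 pu.
have b0 := prim_order_gt0 pu.
have u0 : u != 0.
  apply/eqP => u0; have := prim_expr_order pu; rewrite u0 expr0n gtn_eqF //.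
  by move/eqP; rewrite eq_sym oner_eq0.
have u1 : u != 1.
  have := eq_prim_root_expr pu 1 0; rewrite expr1 expr0 => ->.
  by rewrite /eqn modn_small // mod0n.
have y0 : u ^+ t != 0 by apply: expf_neq0.
have HF : qeval Fl u (u ^+ t) = 0 by rewrite -evalS; apply: rootS hd pu.
have eu : u^-1 = u ^+ b.-1.
  apply: (mulfI u0); rewrite mulfV // -exprS prednK //.
  by rewrite (prim_expr_order pu).
have pinv : b.-primitive_root (u^-1).
  by rewrite eu prim_root_exp_coprime // coprimePn.
have HFi : qeval Fl u^-1 (u^-1 ^+ t) = 0 by rewrite -evalS; apply: rootS hd pinv.
have HFt : qeval Ftl u (u ^+ t) = 0.
  by rewrite evalFt // -exprVn HFi mulr0.
exact: part1 u0 u1 HF HFt.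
Qed.

Lemma seven_contra (z : algC) U V W G :
  z \in Aint ->
  pzero (psub (padd (pmul U Q0l) (pmul V G)) (padd [:: 1%Z] (pscale 7%Z W))) ->
  peval Q0l z = 0 -> peval G z = 0 -> False.
Proof.
move=> zA hc Q0z Gz.
have := pzero_eq z hc.
rewrite !peval_add !peval_mul !peval_scale Q0z Gz !mulr0 addr0.
rewrite /= phi_pos; cbv [Pos.to_nat Pos.iter_op Nat.add].
rewrite mulr0 addr0 => /esym H.
apply: (no_seventh (Aint_peval W zA)).
rewrite -H phi_pos; cbv [Pos.to_nat Pos.iter_op Nat.add]; ring.
Qed.

Theorem mainTheorem7 (t b : nat) : (2 <= b)%N -> ~~ ('Phi_b %| S_poly t).
Proof.
move=> b2; apply/negP => hd.
have b0 : (0 < b)%N by apply: leq_trans b2.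
have [z pz] := C_prim_root_exists b0.
have zA := Aint_prim_root pz.
have Qz := Q0_root hd b2 pz.
have zb := prim_expr_order pz.
case: (boolP (odd b)) => ob.
  have pw : b.-primitive_root (z ^+ 2) by rewrite prim_root_exp_coprime // coprime2n.
  have Qw := Q0_root hd b2 pw.
  by apply: (seven_contra zA check_odd Qz); rewrite peval_spread.
set m := b./2.
have bm : b = (m * 2)%N.
  by rewrite -[b in LHS]odd_double_half (negbTE ob) add0n -muln2.
have m0 : (0 < m)%N by move: b2; rewrite bm; case: (m).
have zm : z ^+ m = -1.
  have : (z ^+ m) ^+ 2 == 1 by rewrite -exprM -bm zb.
  rewrite sqrf_eq1 => /orP [|/eqP //].
  rewrite -(expr0 z) (eq_prim_root_expr pz) mod0n modn_small.
    by rewrite eqn0Ngt m0.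
  rewrite bm; lia.
case: (boolP (odd m)) => om.
  have pw : b.-primitive_root (z ^+ (m + 2)).
    rewrite prim_root_exp_coprime // bm coprimeMr coprimen2 oddD om /= andbT.
    by rewrite coprime_sym /coprime gcdnDl; have := coprimen2 m; rewrite /coprime => ->.
  have Qw := Q0_root hd b2 pw.
  apply: (seven_contra zA check_two Qz).
  by rewrite peval_spread peval_alt -Qw exprD zm mulN1r.
have pw : b.-primitive_root (z ^+ (m + 1)).
  rewrite prim_root_exp_coprime // bm coprimeMr coprimen2 oddD (negbTE om) /=.
  by rewrite addn1 coprimeSn.
have Qw := Q0_root hd b2 pw.
apply: (seven_contra zA check_four Qz).
by rewrite peval_alt -Qw exprD zm expr1 mulN1r.
Qed.
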